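(* Let $A$ and $B$ be rings, $f : A \to B$ a ring homomorphism and $J$ a proper ideal of $B$. Assume that $f(\mathrm{Reg}(A)) \subseteq \mathrm{Reg}(B)$. If $A \bowtie^f J$ is a Prüfer ring, then $A$ is a Prüfer ring.
   Context: All rings are commutative with identity. For a ring homomorphism $f:A\to B$ and an ideal $J$ of $B$, $A \bowtie^f J := \{(a, f(a)+j) : a \in A, j \in J\}$, a subring of $A\times B$. $\mathrm{Reg}(R)$ is the set of regular elements (non-zero-divisors) of $R$. An ideal is regular if it contains a regular element. A ring $R$ is a Prüfer ring if every finitely generated regular ideal of $R$ is invertible. *)

(* Defs.v *)
From HB Require Import structures.
From mathcomp Require Import all_boot all_order all_algebra.
Set Implicit Arguments. Unset Strict Implicit. Unset Printing Implicit Defensive.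
Import GRing.Theory.
Local Open Scope ring_scope.

Definition regular (R : comPzRingType) (x : R) : Prop :=
  forall y : R, x * y = 0 -> y = 0.

Record ideal (R : comPzRingType) := Ideal {
  ideal_pred :> {pred R};
  ideal0 : 0 \in ideal_pred;
  idealD : forall x y, x \in ideal_pred -> y \in ideal_pred -> x + y \in ideal_pred;
  idealMl : forall r x, x \in ideal_pred -> r * x \in ideal_pred
}.

Definition is_proper_ideal (R : comPzRingType) (J : ideal R) : Prop := (1 : R) \notin J.

Definition gen_ideal (R : comPzRingType) (s : seq R) : R -> Prop :=
  fun x => exists c : 'I_(size s) -> R, x = \sum_(k < size s) c k * s`_k.

(* An ideal I (given as a predicate) is invertible: I (R : I) = R, where
   (R : I) = { u in Q(R) | u I \subseteq R }, Q(R) the total ring of fractions.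
   Unfolded: an element u = a / s of Q(R) (s regular) lies in (R : I) iff
   s divides a x for every x in I; as I (R : I) \subseteq R is an R-submodule,
   it equals R iff 1 = \sum_k i_k (a_k / s_k) with i_k in I, a_k / s_k in (R : I);
   each i_k a_k / s_k is the element r_k of R with s_k r_k = i_k a_k. *)
Definition invertible (R : comPzRingType) (I : R -> Prop) : Prop :=
  exists (n : nat) (i a s r : 'I_n -> R),
    (forall k, I (i k)) /\
    (forall k, regular (s k)) /\
    (forall k x, I x -> exists y, s k * y = a k * x) /\
    (forall k, s k * r k = i k * a k) /\
    \sum_(k < n) r k = 1.

Definition pruefer (R : comPzRingType) : Prop :=
  forall s : seq R, (exists x, gen_ideal s x /\ regular x) -> invertible (gen_ideal s).

(* Amalgamated algebra A ⋈^f J = {(a, f a + j)} as a subring of A * B. *)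
Section Amalgamation.
Variables (A B : comPzRingType) (f : {rmorphism A -> B}) (J : ideal B).

Definition amalg_pred : {pred A * B} := [pred x | x.2 - f x.1 \in J].

Record amalg := Amalg { amalg_val :> (A * B)%type; amalg_valP : amalg_pred amalg_val }.

HB.instance Definition _ := [isSub for amalg_val].
HB.instance Definition _ := [Choice of amalg by <:].

Lemma amalg_subring_closed : subring_closed amalg_pred.
Proof.
split.
- by rewrite inE /= rmorph1 subrr ideal0.
- move=> [a1 b1] [a2 b2]; rewrite !inE /= => H1 H2.
  have -> : b1 - b2 - f (a1 - a2) = (b1 - f a1) + (-1) * (b2 - f a2).
    by rewrite rmorphB mulN1r !opprB addrACA [in RHS]addrACA [- f a1 - _]addrC.
  by apply: idealD => //; apply: idealMl.
- move=> [a1 b1] [a2 b2]; rewrite !inE /= => H1 H2.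
  have -> : b1 * b2 - f (a1 * a2) = b2 * (b1 - f a1) + f a1 * (b2 - f a2).
    by rewrite rmorphM !mulrBr [f a1 * b2]mulrC addrA subrK [b2 * b1]mulrC.
  by apply: idealD; apply: idealMl.
Qed.

HB.instance Definition _ :=
  GRing.SubChoice_isSubComPzRing.Build (A * B)%type amalg_pred amalg
    amalg_subring_closed.

End Amalgamation.

(* Main.v *)
Require Import Defs.
From HB Require Import structures.
From mathcomp Require Import all_boot all_order all_algebra.
From Stdlib Require Import ClassicalEpsilon.
From mathcomp Require Import ring.
Local Open Scope ring_scope.
Import GRing.Theory.
Set Implicit Arguments. Unset Strict Implicit.
Section S.
Variables (A B : comPzRingType) (f : {rmorphism A -> B}) (J : ideal B).
Lemma liftP (a : A) : amalg_pred f J (a, f a).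
Proof. by rewrite /amalg_pred /= subrr ideal0. Qed.
Definition lift (a : A) : amalg f J := Amalg (liftP a).
Definition p (u : amalg f J) : A := (val u).1.
Lemma pD u v : p (u + v) = p u + p v. Proof. by []. Qed.
Lemma pM u v : p (u * v) = p u * p v. Proof. by []. Qed.
Lemma p0 : p 0 = 0. Proof. by []. Qed.
Lemma p1 : p 1 = 1. Proof. by []. Qed.
Lemma liftM a b : lift (a * b) = lift a * lift b.
Proof. apply: val_inj => /=. by rewrite rmorphM. Qed.
Lemma lift0 : lift 0 = 0. Proof. apply: val_inj => /=. by rewrite rmorph0. Qed.
Lemma liftD a b : lift (a + b) = lift a + lift b.
Proof. apply: val_inj => /=. by rewrite rmorphD. Qed.
Lemma lift_sum n (F : 'I_n -> A) : lift (\sum_(k < n) F k) = \sum_(k < n) lift (F k).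
Proof. exact: (big_morph _ liftD lift0). Qed.
Lemma p_sum n (F : 'I_n -> amalg f J) : p (\sum_(k < n) F k) = \sum_(k < n) p (F k).
Proof. exact: (big_morph _ pD p0). Qed.
End S.

Lemma gen_idealE (R : comPzRingType) (s : seq R) x :
  gen_ideal s x <-> exists c : nat -> R, x = \sum_(k < size s) c k * s`_k.
Proof.
split.
- move=> [c ->]. exists (fun n => if insub n is Some k then c k else 0).
  apply: eq_bigr => k _. by rewrite valK.
- move=> [c ->]. by exists (fun k => c k).
Qed.

Lemma norm_inv (R : comPzRingType) (I : R -> Prop) x : I x -> regular x -> invertible I ->
  exists n (i a r : 'I_n -> R), (forall k, I (i k)) /\
    (forall k z, I z -> exists y, x * y = a k * z) /\
    (forall k, x * r k = i k * a k) /\ \sum_(k < n) r k = 1.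
Proof.
move=> Ix rx [n [i [a [s [r [Hi [Hs [H3 [H4 H5]]]]]]]]].
have Hy k : exists y, s k * y = a k * x by apply: H3.
pose y k := proj1_sig (constructive_indefinite_description _ (Hy k)).
have Ey k : s k * y k = a k * x := proj2_sig (constructive_indefinite_description _ (Hy k)).
exists n, i, y, r; split => //; split; [|split] => //.
- move=> k z Iz. have [w Hw] := H3 k z Iz. exists w.
  apply/eqP; rewrite -subr_eq0; apply/eqP; apply: (Hs k).
  rewrite mulrBr; apply/eqP; rewrite subr_eq0; apply/eqP. rewrite mulrA [s k * x]mulrC -mulrA Hw.
  by rewrite [s k * (_ * _)]mulrA Ey; ring.
- move=> k. apply/eqP; rewrite -subr_eq0; apply/eqP; apply: (Hs k).
  rewrite mulrBr; apply/eqP; rewrite subr_eq0; apply/eqP. rewrite mulrA [s k * x]mulrC -mulrA H4.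
  by rewrite [s k * (_ * _)]mulrCA Ey; ring.
Qed.

Section M.
Variables (A B : comPzRingType) (f : {rmorphism A -> B}) (J : ideal B).
Lemma gen_lift (s : seq A) z : gen_ideal s z -> gen_ideal (map (lift f J) s) (lift f J z).
Proof.
move/gen_idealE=> [c ->]; apply/gen_idealE; exists (fun n => lift f J (c n)).
rewrite lift_sum size_map; apply: eq_bigr => k _.
by rewrite liftM (nth_map 0) ?ltn_ord // -[lift f J 0]lift0.
Qed.
Lemma gen_proj (s : seq A) u : gen_ideal (map (lift f J) s) u -> gen_ideal s (p u).
Proof.
move/gen_idealE=> [c ->]; apply/gen_idealE; exists (fun n => p (c n)).
rewrite p_sum size_map; apply: eq_bigr => k _.
by rewrite pM (nth_map 0) ?ltn_ord.
Qed.
End M.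

Theorem lemma2p5 (A B : comPzRingType) (f : {rmorphism A -> B}) (J : ideal B) :
  is_proper_ideal J ->
  (forall a : A, regular a -> regular (f a)) ->
  pruefer (amalg f J) ->
  pruefer A.
Proof.
move=> _ freg P s [x [gx rx]].
have gl := gen_lift f J gx.
have rl : regular (lift f J x).
  move=> y /(congr1 val) /= E.
  have E1 : x * (val y).1 = 0 by move: E => [].
  have E2 : f x * (val y).2 = 0 by move: E => [].
  move: (rx _ E1) (freg _ rx _ E2) => h1 h2.
  apply: val_inj; rewrite [val y]surjective_pairing h1 h2; by [].
have [n [i [a [r [Hi [H3 [H4 H5]]]]]]] := norm_inv gl rl (P _ (ex_intro _ _ (conj gl rl))).
exists n, (fun k => p (i k)), (fun k => p (a k)), (fun _ => x), (fun k => p (r k)).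
split; [|split; [|split; [|split]]].
- by move=> k; apply: gen_proj.
- by [].
- move=> k z gz. have [w Hw] := H3 k _ (gen_lift f J gz).
  exists (p w). by move: (congr1 (@p _ _ f J) Hw); rewrite !pM.
- move=> k. by move: (congr1 (@p _ _ f J) (H4 k)); rewrite !pM.
- by rewrite -p_sum H5.
Qed.
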